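(* Let $w=w_1\cdots w_n$ be a word of distinct positive integers avoiding the patterns $3124$ and $3214$. Let $x$ be the position of the maximum letter of $w$, and let $i_1<i_2<\dots<i_k$ ($k\ge0$) be all indices $i<x$ with $w_i>w_{i+1}$ (so that $w_1\cdots w_x$ is the concatenation of the ascending runs $w_1\cdots w_{i_1}$, $w_{i_1+1}\cdots w_{i_2}$, $\dots$, $w_{i_k+1}\cdots w_x$). Then: (1) $\mathrm{Lrmax}(w)=\{w_j: 1\le j\le x,\ j\notin\{i_1+1,i_2+1,\dots,i_k+1\}\}$; in particular $w_{i_1}<w_{i_2}<\dots<w_{i_k}<w_x$. (2) There are indices $x\le c_k\le c_{k-1}\le\dots\le c_1\le c_0=n$ such that every letter of the (possibly empty) factor $b=w_{x+1}\cdots w_{c_k}$ is larger than $w_{i_k}$ (if $k\ge 1$), and for each $1\le j\le k$ every letter of the (possibly empty) factor $b_j=w_{c_j+1}\cdots w_{c_{j-1}}$ is smaller than $w_{i_j}$ and, if $j\ge2$, larger than $w_{i_{j-1}}$. Thus $w_{x+1}\cdots w_n=b\,b_k\,b_{k-1}\cdots b_1$.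
   Context: A word $w$ of distinct positive integers contains a pattern $P=p_1\cdots p_m$ (a permutation of $[m]$) if some subsequence $w_{i_1}\cdots w_{i_m}$ with $i_1<\dots<i_m$ is order-isomorphic to $P$; otherwise it avoids $P$. $\mathrm{Lrmax}(w)$ is the set of letters $w_i$ with $w_i>w_j$ for all $j<i$. *)

(* Defs.v *)
From mathcomp Require Import all_boot.
Set Implicit Arguments. Unset Strict Implicit. Unset Printing Implicit Defensive.

(* Words are [seq nat]; positions are 1-indexed as in the paper:
   [letter w j] is w_j for 1 <= j <= size w. *)
Definition letter (w : seq nat) (j : nat) : nat := nth 0 w j.-1.

Definition contains (w P : seq nat) : Prop :=
  exists2 s : seq nat, subseq s w &
    size s = size P /\
    forall i j, i < size P -> j < size P ->
      (nth 0 s i < nth 0 s j) = (nth 0 P i < nth 0 P j).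

Definition avoids (w P : seq nat) : Prop := ~ contains w P.

Definition Lrmax (w : seq nat) (a : nat) : Prop :=
  exists i, [/\ 1 <= i <= size w, letter w i = a &
                forall j, 1 <= j < i -> letter w j < a].

Definition descents_before (w : seq nat) (x : nat) : seq nat :=
  [seq i <- iota 1 x.-1 | letter w (i.+1) < letter w i].

(* Main.v *)
Require Import Defs.
From mathcomp Require Import all_boot.
From mathcomp Require Import zify.
Set Implicit Arguments.

Lemma letter_inj (w : seq nat) p q : uniq w -> 1 <= p <= size w -> 1 <= q <= size w ->
  letter w p = letter w q -> p = q.
Proof.
move=> U hp hq; have h1 : p.-1 < size w by lia.
have h2 : q.-1 < size w by lia.
rewrite /letter => /eqP; rewrite nth_uniq //; move/eqP; lia.
Qed.
Arguments letter_inj {w p q}.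


Lemma letter_lt (w : seq nat) p q : uniq w -> 1 <= p <= size w -> 1 <= q <= size w ->
  p != q -> letter w p <= letter w q -> letter w p < letter w q.
Proof.
move=> U hp hq npq le; rewrite ltn_neqAle le andbT; apply/eqP => e.
by move/eqP: npq; apply; apply: letter_inj e.
Qed.

Lemma subseq_drop_le (w s : seq nat) i j : i <= j -> subseq s (drop j w) -> subseq s (drop i w).
Proof.
move=> le sub; apply: subseq_trans sub _.
rewrite -(subnK le) -drop_drop; apply: drop_subseq.
Qed.

Lemma subseq_cons_nth (w s : seq nat) i : i < size w -> subseq s (drop i.+1 w) ->
  subseq (nth 0 w i :: s) (drop i w).
Proof. move=> lt sub; by rewrite (drop_nth 0 lt) /= eqxx. Qed.

Lemma contains4 (w : seq nat) P a b c d : 1 <= a -> a < b -> b < c -> c < d -> d <= size w ->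
  size P = 4 ->
  (forall i j, i < 4 -> j < 4 ->
    (nth 0 [:: letter w a; letter w b; letter w c; letter w d] i <
     nth 0 [:: letter w a; letter w b; letter w c; letter w d] j)
    = (nth 0 P i < nth 0 P j)) -> contains w P.
Proof.
move=> ha hab hbc hcd hd sP H.
exists [:: letter w a; letter w b; letter w c; letter w d]; last by rewrite sP.
have := @subseq_drop_le w _ 0 a.-1 (leq0n _); rewrite drop0; apply.
rewrite /letter; apply: subseq_cons_nth; first lia.
apply: (@subseq_drop_le _ _ _ b.-1); first lia.
apply: subseq_cons_nth; first lia.
apply: (@subseq_drop_le _ _ _ c.-1); first lia.
apply: subseq_cons_nth; first lia.
apply: (@subseq_drop_le _ _ _ d.-1); first lia.
apply: subseq_cons_nth; first lia.
exact: sub0seq.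
Qed.


Lemma pat3124 (w : seq nat) a b c d : 1 <= a -> a < b -> b < c -> c < d -> d <= size w ->
  letter w b < letter w c -> letter w c < letter w a -> letter w a < letter w d ->
  contains w [:: 3; 1; 2; 4].
Proof.
move=> ha hab hbc hcd hd h1 h2 h3; apply: (@contains4 w _ a b c d ha hab hbc hcd hd) => //.
move=> [|[|[|[|i]]]] [|[|[|[|j]]]] //= _ _; apply/idP/idP; lia.

Qed.

Lemma pat3214 (w : seq nat) a b c d : 1 <= a -> a < b -> b < c -> c < d -> d <= size w ->
  letter w c < letter w b -> letter w b < letter w a -> letter w a < letter w d ->
  contains w [:: 3; 2; 1; 4].
Proof.
move=> ha hab hbc hcd hd h1 h2 h3; apply: (@contains4 w _ a b c d ha hab hbc hcd hd) => //.
move=> [|[|[|[|i]]]] [|[|[|[|j]]]] //= _ _; apply/idP/idP; lia.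

Qed.

Lemma memD (w : seq nat) x i : (i \in descents_before w x) = (1 <= i < x) && (letter w i.+1 < letter w i).
Proof.
rewrite /descents_before mem_filter mem_iota andbC; congr andb.
by apply/idP/idP; lia.
Qed.

Lemma Lrpos (w : seq nat) x j : uniq w -> avoids w [:: 3; 1; 2; 4] -> 1 <= x <= size w ->
  (forall j, 1 <= j <= size w -> letter w j <= letter w x) ->
  1 <= j <= x -> j \notin map S (descents_before w x) ->
  forall m, 1 <= m < j -> letter w m < letter w j.
Proof.
move=> U A1 hx hmax hj nS m hm.
have hjj : 1 < j -> letter w j.-1 < letter w j.
  move=> j1; have nd : j.-1 \notin descents_before w x.
    by apply: contra nS => h; apply/mapP; exists j.-1 => //; lia.
  rewrite memD negb_and in nd; case/orP: nd; first lia.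
  rewrite prednK; last lia.
  rewrite -leqNgt => le; apply: letter_lt => //; lia.
rewrite ltnNge; apply/negP => le.
have lt : letter w j < letter w m by apply: letter_lt => //; lia.
case: (ltngtP m j.-1) => [mlt|mgt|meq]; [|lia|].
- case: (ltngtP j x) => [jx|jx|jx]; [|lia|].
  + have h1 := hjj ltac:(lia).
    have h2 : letter w m < letter w x.
      by apply: letter_lt => //; try lia; apply: hmax; lia.
    apply: A1; apply: (@pat3124 w m j.-1 j x); lia.
  + subst j; have := hmax m ltac:(lia); lia.
- subst m; have := hjj ltac:(lia); lia.
Qed.
Arguments Lrpos {w x j}.


Lemma Dnot (w : seq nat) x d : uniq w -> avoids w [:: 3; 2; 1; 4] -> 1 <= x <= size w ->
  (forall j, 1 <= j <= size w -> letter w j <= letter w x) ->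
  d \in descents_before w x -> d \notin map S (descents_before w x).
Proof.
move=> U A2 hx hmax hd; apply/mapP => [[e he de]].
rewrite memD in hd; rewrite memD in he; subst d.
case: (ltngtP e.+2 x) => [lt|gt|eq]; [|lia|].
- have h3 : letter w e < letter w x.
    by apply: letter_lt => //; try lia; apply: hmax; lia.
  apply: A2; apply: (@pat3214 w e e.+1 e.+2 x); lia.
- have := hmax e.+1 ltac:(lia); rewrite -eq; lia.
Qed.
Arguments Dnot {w x d}.


Definition Mx (w : seq nat) x d := \max_(p <- iota x.+1 (size w - x) | letter w d < letter w p) p.

Lemma Mx_le (w : seq nat) x d : x <= size w -> Mx w x d <= size w.
Proof. by move=> h; apply/bigmax_leqP_seq => p; rewrite mem_iota => hp _; lia. Qed.

Lemma Mx_mono (w : seq nat) x d1 d2 : letter w d1 < letter w d2 -> Mx w x d2 <= Mx w x d1.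
Proof.
move=> h; apply/bigmax_leqP_seq => q hq hdq.
apply: (@leq_bigmax_seq _ _ _ (fun q => q)) => //; exact: ltn_trans hdq.
Qed.

Lemma Kpat (w : seq nat) x d p q : uniq w -> avoids w [:: 3; 1; 2; 4] -> avoids w [:: 3; 2; 1; 4] ->
  1 <= x <= size w ->
  d \in descents_before w x -> x < p -> p < q -> q <= size w ->
  letter w p < letter w d -> letter w d < letter w q -> False.
Proof.
move=> U A1 A2 hx; rewrite memD => /andP [hd hdesc] hp hpq hq h1 h2.
case: (ltngtP (letter w d.+1) (letter w p)) => [lt|gt|eq].
- apply: A1; apply: (@pat3124 w d d.+1 p q); lia.
- apply: A2; apply: (@pat3214 w d d.+1 p q); lia.
- have : d.+1 = p by apply: (letter_inj U _ _ eq); lia.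
  lia.
Qed.
Arguments Kpat {w x d p q}.


Lemma Alem (w : seq nat) x d p : uniq w -> avoids w [:: 3; 1; 2; 4] -> avoids w [:: 3; 2; 1; 4] ->
  1 <= x <= size w ->
  d \in descents_before w x -> x < p <= maxn x (Mx w x d) -> letter w d < letter w p.
Proof.
move=> U A1 A2 hx hd hp.
rewrite ltnNge; apply/negP => le.
have pn : p <= size w by have := @Mx_le w x d ltac:(lia); lia.
have hd' := hd; rewrite memD in hd'.
have lt : letter w p < letter w d by apply: letter_lt => //; lia.
have : Mx w x d <= p.-1.
  apply/bigmax_leqP_seq => q; rewrite mem_iota => hq hdq.
  case: (ltngtP q p) => [|pq|qp]; first lia.
  - exfalso; apply: (Kpat U A1 A2 hx hd _ pq _ lt hdq); lia.
  - subst q; lia.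
lia.
Qed.
Arguments Alem {w x d p}.


Lemma Blem (w : seq nat) x d p : uniq w -> 1 <= x <= size w ->
  d \in descents_before w x -> x < p <= size w -> maxn x (Mx w x d) < p ->
  letter w p < letter w d.
Proof.
move=> U hx hd hp hm.
have hd' := hd; rewrite memD in hd'.
rewrite ltnNge; apply/negP => le.
have lt : letter w d < letter w p by apply: letter_lt => //; lia.
have : p <= Mx w x d.
  by apply: (@leq_bigmax_seq _ _ _ (fun q => q)) => //; rewrite mem_iota; lia.
lia.
Qed.
Arguments Blem {w x d p}.


Unset Implicit Arguments.

Theorem proposition2p2 (w : seq nat) (x : nat) :
  uniq w -> all (fun a => 0 < a) w ->
  avoids w [:: 3; 1; 2; 4] -> avoids w [:: 3; 2; 1; 4] ->
  1 <= x <= size w ->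
  (forall j, 1 <= j <= size w -> letter w j <= letter w x) ->
  let D := descents_before w x in
  let k := size D in
  let i_ := fun j => nth 0 D j.-1 in
  (* (1) *)
  ((forall a, Lrmax w a <->
      exists j, [/\ 1 <= j <= x, j \notin map S D & letter w j = a])
   /\ sorted ltn (map (letter w) (rcons D x)))
  /\
  (* (2) *)
  (exists c : nat -> nat,
     [/\ c 0 = size w, x <= c k,
         forall j, 1 <= j <= k -> c j <= c j.-1,
         forall p, x < p <= c k -> 1 <= k -> letter w (i_ k) < letter w p
       & forall j, 1 <= j <= k -> forall p, c j < p <= c j.-1 ->
           letter w p < letter w (i_ j) /\
           (2 <= j -> letter w (i_ j.-1) < letter w p)]).
Proof.
move=> U pos A1 A2 hx hmax D k i_; rewrite {}/i_ {}/k {}/D.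
set D := descents_before w x.
have lrD : forall d, d \in D -> forall m, 1 <= m < d -> letter w m < letter w d.
  move=> d hd; have hd' := hd; rewrite memD in hd'.
  apply: (Lrpos U A1 hx hmax); first lia.
  exact: (Dnot U A2 hx hmax hd).
have lrx : forall m, 1 <= m < x -> letter w m < letter w x.
  by move=> m hm; apply: letter_lt => //; try lia; apply: hmax; lia.
have sD0 : sorted ltn D.
  rewrite /D /descents_before; apply: sorted_filter; [exact: ltn_trans | exact: iota_ltn_sorted].
split; first split.
- move=> a; split.
  + case=> i [hi <- hlt]; exists i; split => //.
    * case: (leqP i x) => xi; first lia.
      have := hlt x ltac:(lia); have := hmax i ltac:(lia); lia.
    * apply/mapP => [[e he ie]]; rewrite memD in he.
      have := hlt e ltac:(lia); subst i; lia.
  + case=> j [hj nS <-]; exists j; split => //; first lia.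
    exact: (Lrpos U A1 hx hmax hj nS).
- have sD : sorted ltn (rcons D x).
    rewrite sorted_pairwise; last exact: ltn_trans.
    rewrite pairwise_rcons -sorted_pairwise; last exact: ltn_trans.
    rewrite sD0 andbT; apply/allP => d hd; rewrite memD in hd; lia.
  rewrite sorted_map; apply: (@sub_in_sorted _ [pred i | i \in rcons D x] ltn); last first.
  + exact: sD.
  + by apply/allP.
  move=> i j; rewrite !inE => hi hj /= ij.
  rewrite !mem_rcons !inE in hi hj.
  have i1 : 1 <= i.
    case/orP: hi => [/eqP -> | hi]; first lia.
    by rewrite memD in hi; lia.
  case/orP: hj => [/eqP ej | hj].
  + subst j; apply: lrx; lia.
  + apply: (lrD j hj); lia.
- have nD : forall j, j < size D -> nth 0 D j \in D by move=> j hj; apply: mem_nth.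
  have sortv : forall j, j.+1 < size D -> letter w (nth 0 D j) < letter w (nth 0 D j.+1).
    move=> j hj; have h1 := nD j.+1 hj; apply: (lrD _ h1).
    have := nD j ltac:(lia); rewrite memD => h2.
    have := @sorted_ltn_nth _ _ ltn_trans 0 D sD0 j j.+1.
    rewrite !inE => /(_ ltac:(lia) ltac:(lia) (ltnSn j)); lia.
  exists (fun j => if j is j'.+1 then maxn x (Mx w x (nth 0 D j')) else size w).
  split.
  + by [].
  + case: (size D) => [|k'] /=; lia.
  + move=> [|j] // hj; case: j hj => [|j] hj /=.
    * have := @Mx_le w x (nth 0 D 0) ltac:(lia); lia.
    * have := @Mx_mono w x _ _ (sortv j ltac:(lia)); lia.
  + move=> p; case E: (size D) => [|k'] hp k1 //=.
    apply: (Alem U A1 A2 hx) => //; apply: nD; lia.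
  + move=> [|j] // hj p hp; split.
    * have cn : (if j is j'.+1 then maxn x (Mx w x (nth 0 D j')) else size w) <= size w.
        case: j {hj hp} => [|j] //; have := @Mx_le w x (nth 0 D j) ltac:(lia); lia.
      apply: (Blem U hx); first (apply: nD; lia); simpl in *; lia.
    * case: j hj hp => [|j] hj hp //= _.
      apply: (Alem U A1 A2 hx); first (apply: nD; lia).
      simpl in hp; lia.
Qed.
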